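(* Let $0\ne x\in J$ and let $\mathcal I=\{I_i\}_{i\in F}$ and $\mathcal L=\{L_j\}_{j\in G}$ be $x$-norming partitions. Suppose there exist $i\in F$ and $j\in G$ with $I_i\subset L_j$ and $\min I_i=\min L_j$. Then for every $i'\in F$, $i'\ne i$, either $I_{i'}\subset L_j$ or $I_{i'}\cap L_j=\emptyset$. Consequently there exists a subinterval $F_j$ of $F$ such that $L_j\cap\mathrm{supp}(x)=\bigcup_{i\in F_j}(I_i\cap\mathrm{supp}(x))$.
   Context: For a real sequence $x=(x(n))_{n\in\mathbb N}$ let $\|x\|_J=\sup\bigl(\sum_{i=1}^n|\sum_{k\in I_i}x(k)|^2\bigr)^{1/2}$ over all $n$ and all families of pairwise disjoint intervals $I_1,\dots,I_n$ of $\mathbb N$ (intervals: nonempty sets of consecutive positive integers, possibly infinite). $J=\{x:\|x\|_J<\infty\}$; for $x\in J$ and any interval $I$ the series $\sum_{k\in I}x(k)$ converges. $\mathrm{supp}(x)=\{n:x(n)\ne0\}$. A family of intervals $\mathcal I=\{I_i\}_{i\in F}$: $F=\{1,\dots,k\}$ or $F=\mathbb N$, each $I_i$ an interval, $\max I_i<\min I_{i+1}$ whenever $i+1\in F$; $\|x\|_{\mathcal I}=(\sum_{i\in F}|\sum_{k\in I_i}x(k)|^2)^{1/2}$; it is $x$-norming if $\|x\|_{\mathcal I}=\|x\|_J$. For nonempty $L\subset\mathbb N$, $\sup L=\max L$ if finite and $\infty$ otherwise. An $x$-norming partition is an $x$-norming family with $\{\min I_i,\max I_i\}\subset\mathrm{supp}(x)$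 for all $i<\sup F$, and, if $F$ is finite, $\min I_i\in\mathrm{supp}(x)$ and $\sup I_i=\sup\mathrm{supp}(x)$ for $i=\sup F$. *)

(* Defs.v *)
From Stdlib Require Import Reals Lra Lia List Classical ClassicalEpsilon.
From Coquelicot Require Import Coquelicot.
Open Scope R_scope.

(* Sequences x = (x(n))_{n in N}, N = positive integers; x 0 is never used. *)

Definition is_interval (I : nat -> Prop) : Prop :=
  (exists n, I n) /\
  (forall n, I n -> (1 <= n)%nat) /\
  (forall a b c, I a -> I c -> (a <= b)%nat -> (b <= c)%nat -> I b).

Definition is_min (I : nat -> Prop) (m : nat) : Prop :=
  I m /\ forall k, I k -> (m <= k)%nat.
Definition is_max (I : nat -> Prop) (m : nat) : Prop :=
  I m /\ forall k, I k -> (k <= m)%nat.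

(* sup L = max L if L is finite (bounded), infinity (None) otherwise. *)
Definition is_sup_set (L : nat -> Prop) (s : option nat) : Prop :=
  match s with
  | Some b => is_max L b
  | None => forall n, exists m, L m /\ (n < m)%nat
  end.

Definition isum (x : nat -> R) (I : nat -> Prop) : R :=
  Series (fun k => if excluded_middle_informative (I k) then x k else 0).

Definition normJ (x : nat -> R) : Rbar :=
  Lub_Rbar (fun r => exists l : list (nat -> Prop),
     (forall I, In I l -> is_interval I) /\
     ForallOrdPairs (fun A B => forall k, ~ (A k /\ B k)) l /\
     r = sqrt (fold_right (fun I acc => (isum x I) ^ 2 + acc) 0 l)).

Definition inJ (x : nat -> R) : Prop := is_finite (normJ x).

Definition supp (x : nat -> R) : nat -> Prop := fun n => (1 <= n)%nat /\ x n <> 0.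

(* Index sets F = {1,...,k} (Some k, k >= 1) or F = N (None). *)
Definition inF (F : option nat) (i : nat) : bool :=
  (1 <=? i)%nat && match F with Some k => (i <=? k)%nat | None => true end.

Definition lt_supF (F : option nat) (i : nat) : Prop :=
  match F with Some k => (i < k)%nat | None => True end.

Definition is_family (I : nat -> nat -> Prop) (F : option nat) : Prop :=
  (match F with Some k => (1 <= k)%nat | None => True end) /\
  (forall i, inF F i = true -> is_interval (I i)) /\
  (forall i, inF F i = true -> inF F (S i) = true ->
     forall a b, I i a -> I (S i) b -> (a < b)%nat).

Definition fam_norm (x : nat -> R) (I : nat -> nat -> Prop) (F : option nat) : Rbar :=
  Lim_seq (fun n => sqrt (sum_f_R0
     (fun i => if inF F i then (Rabs (isum x (I i))) ^ 2 else 0) n)).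

Definition x_norming (x : nat -> R) (I : nat -> nat -> Prop) (F : option nat) : Prop :=
  is_family I F /\ fam_norm x I F = normJ x.

Definition x_norming_partition (x : nat -> R) (I : nat -> nat -> Prop) (F : option nat) : Prop :=
  x_norming x I F /\
  (forall i, inF F i = true -> lt_supF F i ->
     (exists m, is_min (I i) m /\ supp x m) /\
     (exists m, is_max (I i) m /\ supp x m)) /\
  (match F with
   | Some k => (exists m, is_min (I k) m /\ supp x m) /\
               (exists s, is_sup_set (I k) s /\ is_sup_set (supp x) s)
   | None => True
   end).

(* Main.v *)
Require Import Defs.
From Stdlib Require Import Reals.
From Coquelicot Require Import Coquelicot.
From Stdlib Require Import Lra Lia List Classical ClassicalEpsilon.
Open Scope R_scope.


Definition ind (x : nat -> R) (P : nat -> Prop) (k : nat) : R :=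
  if excluded_middle_informative (P k) then x k else 0.

Lemma isum_ind x P : isum x P = Series (ind x P).
Proof. reflexivity. Qed.

Lemma sum_f_R0_zero_after (f : nat -> R) M n :
  (forall k, (M < k)%nat -> f k = 0) -> (M <= n)%nat ->
  sum_f_R0 f n = sum_f_R0 f M.
Proof.
  intros H Hn. induction Hn; auto.
  simpl. rewrite IHHn, H; [ring|lia].
Qed.

Lemma bounded_is_series x P M :
  (forall n, P n -> (n <= M)%nat) ->
  is_series (ind x P) (sum_f_R0 (ind x P) M).
Proof.
  intros HB. apply is_series_Reals. intros eps Heps.
  exists M. intros n Hn. unfold R_dist.
  rewrite (sum_f_R0_zero_after _ M n); auto.
  - rewrite Rminus_diag, Rabs_R0; lra.
  - intros k Hk. unfold ind. destruct excluded_middle_informative as [Hp|Hp]; auto.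
    apply HB in Hp. lia.
Qed.

Lemma bounded_ex_series x P M :
  (forall n, P n -> (n <= M)%nat) -> ex_series (ind x P).
Proof. intros H. eexists. apply (bounded_is_series x P M H). Qed.

Lemma bounded_isum x P M :
  (forall n, P n -> (n <= M)%nat) -> isum x P = sum_f_R0 (ind x P) M.
Proof. intros H. apply is_series_unique, bounded_is_series, H. Qed.

Lemma isum_single x r : isum x (fun k => k = r) = x r.
Proof.
  rewrite (bounded_isum x _ r) by (intros; lia).
  destruct r as [|r].
  - simpl. unfold ind. destruct excluded_middle_informative; [auto|congruence].
  - simpl. rewrite (sum_eq _ (fun _ => 0)).
    + rewrite sum_cte. unfold ind. destruct excluded_middle_informative; [ring|congruence].
    + intros k Hk. unfold ind. destruct excluded_middle_informative; [lia|auto].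
Qed.

Lemma isum_split x A B C :
  ex_series (ind x A) -> ex_series (ind x B) ->
  (forall k, ~ (A k /\ B k)) -> (forall k, C k <-> A k \/ B k) ->
  isum x C = isum x A + isum x B.
Proof.
  intros EA EB D E. rewrite !isum_ind, <- Series_plus by auto.
  apply Series_ext. intros n. unfold ind.
  specialize (D n). specialize (E n).
  destruct (excluded_middle_informative (C n)) as [c|c];
  destruct (excluded_middle_informative (A n)) as [a|a];
  destruct (excluded_middle_informative (B n)) as [b|b];
  try ring; exfalso; tauto.
Qed.

Definition sumsq (x : nat -> R) (l : list (nat -> Prop)) : R :=
  fold_right (fun I acc => (isum x I) ^ 2 + acc) 0 l.

Definition disj (A B : nat -> Prop) : Prop := forall k, ~ (A k /\ B k).

Definition valid (l : list (nat -> Prop)) : Prop :=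
  (forall I, In I l -> is_interval I) /\ ForallOrdPairs disj l.

Lemma sumsq_nonneg x l : 0 <= sumsq x l.
Proof. induction l; simpl; [lra|]. nra. Qed.

Lemma normJ_bound x N : normJ x = Finite N ->
  0 <= N /\ forall l, valid l -> sumsq x l <= N ^ 2.
Proof.
  intros HN.
  assert (HU : forall l, valid l -> sqrt (sumsq x l) <= N).
  { intros l [H1 H2].
    pose proof (Lub_Rbar_correct (fun r => exists l : list (nat -> Prop),
     (forall I, In I l -> is_interval I) /\
     ForallOrdPairs (fun A B => forall k, ~ (A k /\ B k)) l /\
     r = sqrt (fold_right (fun I acc => (isum x I) ^ 2 + acc) 0 l))) as [Hub _].
    unfold normJ in HN. rewrite HN in Hub. apply (Hub (sqrt (sumsq x l))).
    exists l. split; [exact H1|split; [exact H2|reflexivity]]. }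
  assert (H0 : 0 <= N).
  { specialize (HU nil). simpl in HU. unfold sumsq in HU. simpl in HU.
    rewrite sqrt_0 in HU. apply HU. split; [intros I []|constructor]. }
  split; auto. intros l Hl. specialize (HU l Hl).
  pose proof (sumsq_nonneg x l).
  pose proof (sqrt_sqrt _ H).
  pose proof (sqrt_pos (sumsq x l)). nra.
Qed.

Lemma sum_zero_le (f : nat -> R) n : (forall k, (k <= n)%nat -> f k = 0) -> sum_f_R0 f n = 0.
Proof.
  intros H. rewrite (sum_eq _ (fun _ => 0)) by auto. rewrite sum_cte. ring.
Qed.

Lemma sum_diff (f : nat -> R) n m : (n <= m)%nat ->
  sum_f_R0 f m - sum_f_R0 f n = sum_f_R0 (fun k => if (n <? k)%nat then f k else 0) m.
Proof.
  intros H. induction H.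
  - rewrite Rminus_diag. symmetry. apply sum_zero_le. intros k Hk. destruct (Nat.ltb_spec n k); [lia|auto].
  - simpl. rewrite <- IHle. destruct (Nat.ltb_spec n (S m)); [ring|lia].
Qed.

Lemma tail_diff x e n m : (e <= n)%nat -> (n < m)%nat ->
  sum_f_R0 (ind x (fun k => (e <= k)%nat)) m - sum_f_R0 (ind x (fun k => (e <= k)%nat)) n
  = isum x (fun k => (S n <= k /\ k <= m)%nat).
Proof.
  intros H1 H2. rewrite sum_diff by lia. rewrite (bounded_isum x (fun k => (S n <= k /\ k <= m)%nat) m) by (intros; lia).
  apply sum_eq. intros k Hk. unfold ind.
  destruct (Nat.ltb_spec n k);
  destruct (excluded_middle_informative (e <= k)%nat);
  destruct (excluded_middle_informative (S n <= k /\ k <= m)%nat);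
  auto; lia.
Qed.

Lemma tail_ex_series x e : inJ x -> ex_series (ind x (fun k => (e <= k)%nat)).
Proof.
  intros HJ. set (N := real (normJ x)).
  assert (HN : normJ x = Finite N) by (symmetry; apply HJ).
  destruct (normJ_bound x N HN) as [N0 Hb].
  set (a := ind x (fun k => (e <= k)%nat)).
  assert (HC : Cauchy_crit_series a).
  { apply NNPP. intros HnC. unfold Cauchy_crit_series, Cauchy_crit in HnC.
    apply not_all_ex_not in HnC. destruct HnC as [eps Heps].
    apply imply_to_and in Heps. destruct Heps as [Heps HnC].
    assert (Hbad : forall N1, exists n m, (N1 <= n)%nat /\ (n < m)%nat /\
             eps <= Rabs (isum x (fun k => (S n <= k /\ k <= m)%nat))).
    { intros N1. apply NNPP. intros Hno. apply HnC. exists (Nat.max N1 e).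
      intros n m Hn Hm. apply Rnot_le_lt. intros Hle.
      destruct (Nat.lt_total n m) as [Hlt|[Heq|Hgt]].
      - apply Hno. exists n, m. split; [lia|split;auto].
        rewrite <- (tail_diff x e) by lia. unfold R_dist in Hle.
        rewrite Rabs_minus_sym. apply Hle.
      - subst. unfold R_dist in Hle. rewrite Rminus_diag, Rabs_R0 in Hle. lra.
      - apply Hno. exists m, n. split; [lia|split;auto].
        rewrite <- (tail_diff x e) by lia. apply Hle. }
    assert (Hlist : forall K N1, exists l, valid l /\
              (forall P, In P l -> forall k, P k -> (N1 <= k)%nat) /\
              INR K * eps ^ 2 <= sumsq x l).
    { induction K as [|K IH]; intros N1.
      - exists nil. split; [split; [intros P []|constructor]|]. split; [intros P []|].
        simpl. unfold sumsq; simpl. lra.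
      - destruct (Hbad N1) as [n [m [H1 [H2 H3]]]].
        destruct (IH (S m)) as [l [[Hv1 Hv2] [Hl1 Hl2]]].
        exists ((fun k => (S n <= k /\ k <= m)%nat) :: l). split; [split|split].
        + intros P [<-|HP]; auto. split; [exists (S n); lia|split; intros; lia].
        + constructor; auto. apply Forall_forall. intros P HP k [Hk1 Hk2].
          apply Hl1 in Hk2; auto. lia.
        + intros P [<-|HP] k Hk; [lia|]. apply Hl1 in Hk; auto. lia.
        + rewrite S_INR. unfold sumsq in *. cbn [fold_right].
          assert (eps ^ 2 <= isum x (fun k => (S n <= k /\ k <= m)%nat) ^ 2).
          { rewrite <- (pow2_abs (isum x (fun k => (S n <= k /\ k <= m)%nat))).
            apply pow_incr; lra. }
          lra. }
    destruct (INR_archimed (eps ^ 2) (N ^ 2)) as [K HK]. { apply pow_lt; lra. }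
    destruct (Hlist K 0%nat) as [l [Hv [_ Hs]]].
    specialize (Hb l Hv). lra. }
  destruct (cv_cauchy_2 a HC) as [l Hl]. exists l. apply is_series_Reals. exact Hl.
Qed.

Lemma ex_isum_interval x P : inJ x -> is_interval P -> ex_series (ind x P).
Proof.
  intros HJ [[e He] [H1 H2]].
  destruct (classic (exists M, forall n, P n -> (n <= M)%nat)) as [[M HM]|HnB].
  - exact (bounded_ex_series x P M HM).
  - assert (Ht : forall k, (e <= k)%nat -> P k).
    { intros k Hk. apply NNPP. intros Hn. apply HnB. exists k. intros n Hn'.
      destruct (Nat.le_gt_cases n k); auto. exfalso. apply Hn. apply (H2 e k n); auto; lia. }
    apply (ex_series_ext (fun k => plus (ind x (fun k => P k /\ (k < e)%nat) k) (ind x (fun k => (e <= k)%nat) k))).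
    + intros k. unfold ind, plus. simpl.
      destruct (excluded_middle_informative (P k /\ (k < e)%nat));
      destruct (excluded_middle_informative (e <= k)%nat);
      destruct (excluded_middle_informative (P k)); try lia; try ring; exfalso.
      * tauto.
      * apply n0; auto.
      * apply n; split; auto. lia.
    + apply (@ex_series_plus R_AbsRing R_NormedModule (ind x (fun k => P k /\ (k < e)%nat)) (ind x (fun k => (e <= k)%nat))).
      * apply (bounded_ex_series x _ e). intros; lia.
      * apply tail_ex_series; auto.
Qed.

Lemma inF_ge1 F i : inF F i = true -> (1 <= i)%nat.
Proof. unfold inF. intros H. apply andb_prop in H as [H _]. apply Nat.leb_le in H. exact H. Qed.

Lemma inF_between F a b c : inF F a = true -> inF F c = true -> (a <= b)%nat -> (b <= c)%nat ->
  inF F b = true.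
Proof.
  unfold inF. intros Ha Hc H1 H2.
  apply andb_prop in Ha as [Ha _]. apply andb_prop in Hc as [_ Hc].
  apply Nat.leb_le in Ha. apply andb_true_intro. split; [apply Nat.leb_le; lia|].
  destruct F; auto. apply Nat.leb_le in Hc. apply Nat.leb_le. lia.
Qed.

Lemma fam_lt I F k k' p q : is_family I F -> inF F k = true -> inF F k' = true ->
  (k < k')%nat -> I k p -> I k' q -> (p < q)%nat.
Proof.
  intros [_ [Hint Hord]] Hk Hk' Hlt. revert q. induction Hlt; intros q Hp Hq.
  - apply (Hord k Hk Hk' p q Hp Hq).
  - assert (Hm : inF F m = true) by (apply (inF_between F k m (S m)); auto; lia).
    destruct (Hint m Hm) as [[e He] _].
    specialize (IHHlt Hm e Hp He). pose proof (Hord m Hm Hk' e q He Hq). lia.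
Qed.

Definition disj' := disj.

Lemma fam_disj I F k k' : is_family I F -> inF F k = true -> inF F k' = true ->
  k <> k' -> disj (I k) (I k').
Proof.
  intros HF Hk Hk' Hne t [H1 H2]. destruct (Nat.lt_gt_cases k k') as [[Hl|Hl] _]; auto.
  - pose proof (fam_lt I F k k' t t HF Hk Hk' Hl H1 H2). lia.
  - pose proof (fam_lt I F k' k t t HF Hk' Hk Hl H2 H1). lia.
Qed.

Lemma FOP_app {A} (R : A -> A -> Prop) l1 l2 : ForallOrdPairs R l1 -> ForallOrdPairs R l2 ->
  (forall a b, In a l1 -> In b l2 -> R a b) -> ForallOrdPairs R (l1 ++ l2).
Proof.
  induction l1 as [|a l1 IH]; intros H1 H2 H; simpl; auto.
  inversion H1; subst. constructor.
  - apply Forall_app. split; auto. apply Forall_forall. intros b Hb. apply H; simpl; auto.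
  - apply IH; auto. intros; apply H; simpl; auto.
Qed.

Lemma FOP_map {A B} (R : B -> B -> Prop) (f : A -> B) s : NoDup s ->
  (forall a b, In a s -> In b s -> a <> b -> R (f a) (f b)) -> ForallOrdPairs R (map f s).
Proof.
  induction s as [|a s IH]; intros Hn H; simpl; constructor.
  - inversion Hn; subst. apply Forall_forall. intros y Hy. apply in_map_iff in Hy as [b [<- Hb]].
    apply H; simpl; auto. intros ->. auto.
  - inversion Hn; subst. apply IH; auto. intros; apply H; simpl; auto.
Qed.

Definition sumf (f : nat -> R) (s : list nat) : R := fold_right (fun m acc => f m + acc) 0 s.

Lemma sumf_app f s1 s2 : sumf f (s1 ++ s2) = sumf f s1 + sumf f s2.
Proof. induction s1; simpl; [ring|]. unfold sumf in *. simpl. rewrite IHs1. ring. Qed.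

Lemma sumsq_app x l1 l2 : sumsq x (l1 ++ l2) = sumsq x l1 + sumsq x l2.
Proof. induction l1 as [|a l1 IH]; [unfold sumsq; simpl; ring|].
  change (sumsq x ((a::l1)++l2)) with (isum x a ^2 + sumsq x (l1++l2)). rewrite IH.
  change (sumsq x (a::l1)) with (isum x a ^2 + sumsq x l1). ring. Qed.

Lemma sumsq_map x I s : sumsq x (map I s) = sumf (fun m => isum x (I m) ^ 2) s.
Proof. induction s as [|a s IH]; [reflexivity|].
  change (sumsq x (map I (a::s))) with (isum x (I a) ^2 + sumsq x (map I s)). rewrite IH. reflexivity. Qed.

Lemma sum_f_R0_sumf h n : sum_f_R0 h n = sumf h (seq 0 (S n)).
Proof.
  induction n; [unfold sumf; simpl; ring|].
  rewrite seq_S, sumf_app. simpl. rewrite IHn. unfold sumf. simpl. ring.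
Qed.

Lemma sumf_ext f h s : (forall m, In m s -> f m = h m) -> sumf f s = sumf h s.
Proof. induction s as [|a s IH]; intros H; [reflexivity|].
  change (f a + sumf f s = h a + sumf h s). rewrite H, IH; [reflexivity| |left; reflexivity].
  intros m Hm; apply H; right; exact Hm. Qed.

Lemma sumf_plus f h s : sumf (fun m => f m + h m) s = sumf f s + sumf h s.
Proof. induction s as [|a s IH]; [unfold sumf; simpl; ring|].
  change (f a + h a + sumf (fun m => f m + h m) s = (f a + sumf f s) + (h a + sumf h s)). rewrite IH. ring. Qed.

Lemma sumf_filter f (q : nat -> bool) s :
  sumf (fun m => if q m then f m else 0) s = sumf f (filter q s).
Proof.
  induction s as [|a s IH]; [reflexivity|]. simpl. destruct (q a); simpl.
  - change (f a + sumf (fun m => if q m then f m else 0) s = f a + sumf f (filter q s)). rewrite IH; ring.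
  - change (0 + sumf (fun m => if q m then f m else 0) s = sumf f (filter q s)). rewrite IH; ring.
Qed.

Lemma sumf_zero f s : (forall m, In m s -> f m = 0) -> sumf f s = 0.
Proof. intros H. rewrite (sumf_ext f (fun _ => 0)) by auto. clear H. induction s as [|a s IH]; [reflexivity|].
  change (0 + sumf (fun _ => 0) s = 0). rewrite IH; ring. Qed.

Lemma sumf_range (g : nat -> R) k1 k2 n : (k1 <= k2)%nat -> (k2 <= n)%nat ->
  sumf (fun m => if andb (k1 <=? m)%nat (m <=? k2)%nat then g m else 0) (seq 0 (S n))
  = sumf g (seq k1 (S k2 - k1)).
Proof.
  intros H1 H2.
  replace (S n) with (k1 + ((S k2 - k1) + (n - k2)))%nat by lia.
  rewrite !seq_app, !sumf_app, Nat.add_0_l.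
  rewrite (sumf_zero _ (seq 0 k1)), (sumf_zero _ (seq (k1 + (S k2 - k1)) (n - k2))).
  - rewrite (sumf_ext _ g); [ring|]. intros m Hm. apply in_seq in Hm.
    destruct (Nat.leb_spec k1 m); destruct (Nat.leb_spec m k2); simpl; auto; lia.
  - intros m Hm. apply in_seq in Hm.
    destruct (Nat.leb_spec k1 m); destruct (Nat.leb_spec m k2); simpl; auto; lia.
  - intros m Hm. apply in_seq in Hm.
    destruct (Nat.leb_spec k1 m); destruct (Nat.leb_spec m k2); simpl; auto; lia.
Qed.

Lemma sum_mono (f : nat -> R) n m : (forall k, 0 <= f k) -> (n <= m)%nat ->
  sum_f_R0 f n <= sum_f_R0 f m.
Proof. intros H Hle. induction Hle; simpl; [lra|]. specialize (H (S m)). lra. Qed.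

Lemma RL x I F N k1 k2 l :
  is_family I F -> fam_norm x I F = Finite N -> 0 <= N ->
  (forall l, valid l -> sumsq x l <= N ^ 2) ->
  (k1 <= k2)%nat -> (forall m, (k1 <= m <= k2)%nat -> inF F m = true) ->
  valid l ->
  (forall P, In P l -> forall m, inF F m = true -> (m < k1 \/ k2 < m)%nat -> disj P (I m)) ->
  sumsq x l <= sumsq x (map I (seq k1 (S k2 - k1))).
Proof.
  intros HF HN HN0 Hb Hk Hin [Hv1 Hv2] Hd.
  set (T := fun n => sum_f_R0 (fun i => if inF F i then Rabs (isum x (I i)) ^ 2 else 0) n).
  set (q := fun m => andb (inF F m) (negb (andb (k1 <=? m)%nat (m <=? k2)%nat))).
  set (M := sumsq x (map I (seq k1 (S k2 - k1)))).
  assert (HT : forall n, (k2 <= n)%nat ->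
     T n = sumsq x (map I (filter q (seq 0 (S n)))) + M).
  { intros n Hn. unfold T, M. rewrite sum_f_R0_sumf, !sumsq_map, <- sumf_filter.
    rewrite <- (sumf_range _ k1 k2 n) by auto. rewrite <- sumf_plus.
    apply sumf_ext. intros m _. rewrite pow2_abs. unfold q.
    destruct (Nat.leb_spec k1 m); destruct (Nat.leb_spec m k2); simpl;
    destruct (inF F m) eqn:E; simpl; try ring.
    rewrite Hin in E; [discriminate|lia]. }
  assert (Hln : forall n, valid (map I (filter q (seq 0 (S n))) ++ l)).
  { intros n. split.
    - intros P HP. apply in_app_or in HP as [HP|HP]; auto.
      apply in_map_iff in HP as [m [<- Hm]]. apply filter_In in Hm as [_ Hm].
      unfold q in Hm. apply andb_prop in Hm as [Hm _]. destruct HF as [_ [HF _]]. auto.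
    - apply FOP_app; auto.
      + apply FOP_map. apply NoDup_filter, seq_NoDup.
        intros a b Ha Hb' Hab. apply filter_In in Ha as [_ Ha]. apply filter_In in Hb' as [_ Hb'].
        unfold q in Ha, Hb'. apply andb_prop in Ha as [Ha _]. apply andb_prop in Hb' as [Hb' _].
        apply (fam_disj I F); auto.
      + intros A B HA HB. apply in_map_iff in HA as [m [<- Hm]]. apply filter_In in Hm as [_ Hm].
        unfold q in Hm. apply andb_prop in Hm as [Hm1 Hm2].
        intros t [H1 H2]. refine (Hd B HB m Hm1 _ t (conj H2 H1)).
        destruct (Nat.leb_spec k1 m); destruct (Nat.leb_spec m k2); simpl in Hm2; try discriminate; lia. }
  assert (Hmain : forall n, sumsq x l - M + T n <= N ^ 2).
  { intros n. assert (T n <= T (Nat.max n k2)).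
    { apply sum_mono; [|lia]. intros k. destruct (inF F k); [apply pow2_ge_0|lra]. }
    rewrite (HT (Nat.max n k2)) in H by lia. specialize (Hb _ (Hln (Nat.max n k2))).
    rewrite sumsq_app in Hb. lra. }
  fold M. apply Rnot_lt_le. intros Hc.
  assert (HT0 : forall n, 0 <= T n).
  { intros n. unfold T. apply cond_pos_sum. intros k. destruct (inF F k); [apply pow2_ge_0|lra]. }
  assert (Hle : Rbar_le (Lim_seq (fun n => sqrt (T n))) (Lim_seq (fun _ => sqrt (N ^ 2 - (sumsq x l - M))))).
  { apply Lim_seq_le_loc. exists 0%nat. intros n _. apply sqrt_le_1_alt.
    specialize (Hmain n). lra. }
  unfold fam_norm in HN. change (Lim_seq (fun n => sqrt (T n)) = Finite N) in HN. rewrite HN, Lim_seq_const in Hle. simpl in Hle.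
  assert (H0 : 0 <= N ^ 2 - (sumsq x l - M)) by (specialize (Hmain 0%nat); specialize (HT0 0%nat); lra).
  pose proof (sqrt_sqrt _ H0). pose proof (sqrt_pos (N ^ 2 - (sumsq x l - M))).
  assert (N * N <= sqrt (N ^ 2 - (sumsq x l - M)) * sqrt (N ^ 2 - (sumsq x l - M)))
    by (assert (HleR : N <= sqrt (N ^ 2 - (sumsq x l - M))) by exact Hle; apply Rmult_le_compat; lra).
  replace (N ^ 2) with (N * N) in * by ring. lra.
Qed.

Lemma max_exists (P : nat -> Prop) M : (exists n, P n) -> (forall n, P n -> (n <= M)%nat) ->
  exists m, is_max P m.
Proof.
  revert P. induction M as [|M IH]; intros P [n Hn] HB.
  - exists 0%nat. assert (n = 0%nat) by (apply HB in Hn; lia). subst. split; auto.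
  - destruct (classic (P (S M))) as [HS|HS].
    + exists (S M). split; auto.
    + apply (IH P (ex_intro _ n Hn)). intros t Ht. pose proof (HB t Ht).
      destruct (Nat.eq_dec t (S M)); [subst; contradiction|lia].
Qed.

Lemma part_min x I F k : x_norming_partition x I F -> inF F k = true ->
  exists m, is_min (I k) m /\ supp x m.
Proof.
  intros [_ [H2 H3]] Hk. destruct F as [g|].
  - destruct (Nat.lt_ge_cases k g).
    + apply (H2 k Hk H).
    + assert (k = g). { unfold inF in Hk. apply andb_prop in Hk as [_ Hk]. apply Nat.leb_le in Hk. lia. }
      subst. apply H3.
  - apply (H2 k Hk Logic.I).
Qed.

Lemma part_after x I F k k' : x_norming_partition x I F -> inF F k = true -> I k k' ->
  exists r, I k r /\ (k' <= r)%nat /\ supp x r.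
Proof.
  intros [[[_ [Hint _]] _] [H2 H3]] Hk Hk'. destruct F as [g|].
  - destruct (Nat.lt_ge_cases k g).
    + destruct (H2 k Hk H) as [_ [m [[Hm1 Hm2] Hm3]]]. exists m. auto.
    + assert (k = g). { unfold inF in Hk. apply andb_prop in Hk as [_ Hk]. apply Nat.leb_le in Hk. lia. }
      subst. destruct H3 as [_ [[s|] [Hs1 Hs2]]].
      * destruct Hs1 as [Hs1 Hs1']. destruct Hs2 as [Hs2 _]. exists s. auto.
      * destruct (Hs2 k') as [m [Hm1 Hm2]]. destruct (Hs1 m) as [m2 [Hm3 Hm4]].
        exists m. split; [|split; auto; lia].
        destruct (Hint g Hk) as [_ [_ Hc]]. apply (Hc k' m m2); auto; lia.
  - destruct (H2 k Hk Logic.I) as [_ [m [[Hm1 Hm2] Hm3]]]. exists m. auto.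
Qed.

Lemma RLs x I F N k l :
  is_family I F -> fam_norm x I F = Finite N -> 0 <= N ->
  (forall l, valid l -> sumsq x l <= N ^ 2) -> inF F k = true -> valid l ->
  (forall P, In P l -> forall m, inF F m = true -> m <> k -> disj P (I m)) ->
  sumsq x l <= isum x (I k) ^ 2.
Proof.
  intros HF HN HN0 Hb Hk Hl Hd.
  pose proof (RL x I F N k k l HF HN HN0 Hb (le_n k)) as H.
  replace (S k - k)%nat with 1%nat in H by lia. unfold sumsq in H at 2. simpl in H.
  replace (isum x (I k) ^ 2) with (isum x (I k) * (isum x (I k) * 1) + 0) by ring.
  apply H; auto.
  - intros m Hm. replace m with k by lia. auto.
  - intros P HP m Hm Hr. apply Hd; auto. lia.
Qed.

Lemma RL1 x I F N k l :
  is_family I F -> fam_norm x I F = Finite N -> 0 <= N ->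
  (forall l, valid l -> sumsq x l <= N ^ 2) -> inF F k = true -> valid l ->
  (forall P, In P l -> forall t, P t -> I k t) ->
  sumsq x l <= isum x (I k) ^ 2.
Proof.
  intros HF HN HN0 Hb Hk Hl Hs. apply (RLs x I F N k l); auto.
  intros P HP m Hm Hne t [H1 H2]. apply (fam_disj I F k m HF Hk Hm (not_eq_sym Hne) t).
  split; auto. apply (Hs P HP t H1).
Qed.

Lemma valid2 A B : is_interval A -> is_interval B -> disj A B -> valid (A :: B :: nil).
Proof.
  intros HA HB HD. split.
  - intros P [<-|[<-|[]]]; auto.
  - constructor; [constructor; auto|constructor; constructor].
Qed.

Lemma valid1 A : is_interval A -> valid (A :: nil).
Proof. intros HA. split; [intros P [<-|[]]; auto|constructor; constructor]. Qed.

Lemma sumsq2 x A B : sumsq x (A :: B :: nil) = isum x A ^ 2 + isum x B ^ 2.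
Proof. unfold sumsq. simpl. ring. Qed.

Lemma sumsq1 x A : sumsq x (A :: nil) = isum x A ^ 2.
Proof. unfold sumsq. simpl. ring. Qed.

Lemma itv_cc p q : (1 <= p)%nat -> (p <= q)%nat -> is_interval (fun t => (p <= t /\ t <= q)%nat).
Proof. intros. split; [exists p; lia|split; intros; lia]. Qed.

Lemma itv_co p q : (1 <= p)%nat -> (p < q)%nat -> is_interval (fun t => (p <= t /\ t < q)%nat).
Proof. intros. split; [exists p; lia|split; intros; lia]. Qed.

Lemma itv_1 p : (1 <= p)%nat -> is_interval (fun t => t = p).
Proof. intros. split; [exists p; lia|split; intros; lia]. Qed.

Lemma dich x I F L G i j i' k k' a :
  inJ x -> x_norming_partition x I F -> x_norming_partition x L G ->
  inF F i = true -> inF G j = true -> (forall t, I i t -> L j t) ->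
  is_min (I i) a -> is_min (L j) a ->
  inF F i' = true -> i' <> i -> I i' k -> L j k -> I i' k' -> ~ L j k' -> False.
Proof.
  intros HJ HPI HPL Hi Hj Hsub [Ha1 Ha2] [Hb1 Hb2] Hi' Hne Hk1 Hk2 Hk'1 Hk'2.
  set (N := real (normJ x)).
  assert (HN : normJ x = Finite N) by (symmetry; apply HJ).
  destruct (normJ_bound x N HN) as [HN0 Hb].
  pose proof HPI as [[HFI HNI] _]. pose proof HPL as [[HFL HNL] _].
  rewrite HN in HNI, HNL.
  pose proof HFI as [_ [HintI _]]. pose proof HFL as [_ [HintL _]].
  assert (Hii' : (i < i')%nat).
  { destruct (Nat.lt_gt_cases i i') as [[H|H] _]; auto.
    pose proof (fam_lt I F i' i k a HFI Hi' Hi H Hk1 Ha1). pose proof (Hb2 k Hk2). lia. }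
  assert (Hlt : forall p q, I i p -> I i' q -> (p < q)%nat)
    by (intros; apply (fam_lt I F i i'); auto).
  destruct (HintL j Hj) as [_ [HL1 HLc]].
  destruct (HintI i' Hi') as [_ [HI1 HIc]].
  assert (Hak' : (a < k')%nat) by auto.
  assert (Hkk' : (k < k')%nat).
  { destruct (Nat.lt_ge_cases k k'); auto. exfalso. apply Hk'2. apply (HLc a k' k); auto. lia. }
  assert (Hbd : forall t, L j t -> (t < k')%nat).
  { intros t Ht. destruct (Nat.lt_ge_cases t k'); auto. exfalso. apply Hk'2.
    apply (HLc a k' t); auto. lia. }
  destruct (max_exists (L j) k') as [b [Hbm1 Hbm2]]; [exists a; auto|intros t Ht; apply Hbd in Ht; lia|].
  assert (Hbk' : (b < k')%nat) by auto.
  destruct (part_min x I F i' HPI Hi') as [c [[Hc1 Hc2] Hcs]].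
  assert (Hac : (a < c)%nat) by auto.
  assert (Hck : (c <= k)%nat) by auto.
  assert (Hkb : (k <= b)%nat) by auto.
  assert (HIcb : forall t, (c <= t <= b)%nat -> I i' t).
  { intros t Ht. apply (HIc c t k'); auto; lia. }
  destruct (part_after x I F i' k' HPI Hi' Hk'1) as [r [Hr1 [Hr2 Hr3]]].
  assert (HLchar : forall t, L j t <-> (a <= t <= b)%nat).
  { intros t. split; [intros Ht; split; auto|intros Ht; apply (HLc a t b); auto; lia]. }
  assert (Ha1' : (1 <= a)%nat) by (apply (HL1 a); auto).
  assert (Has : supp x a).
  { destruct (part_min x I F i HPI Hi) as [m [[Hm1 Hm2] Hm3]].
    replace a with m; auto. pose proof (Hm2 a Ha1). pose proof (Ha2 m Hm1). lia. }
  assert (Hmid : forall m, (i <= m < i')%nat -> inF F m = true /\ forall t, I m t -> (a <= t < c)%nat).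
  { intros m Hm. assert (HmF : inF F m = true) by (apply (inF_between F i m i'); auto; lia).
    split; auto. intros t Ht. split.
    - destruct (Nat.eq_dec m i) as [->|Hmi]; auto.
      pose proof (fam_lt I F i m a t HFI Hi HmF ltac:(lia) Ha1 Ht). lia.
    - apply (fam_lt I F m i' t c HFI HmF Hi'); auto; lia. }
  set (W := fun t => (a <= t /\ t < c)%nat).
  set (U := fun t => (c <= t /\ t <= b)%nat).
  set (V := fun t => I i' t /\ (b < t)%nat).
  set (Y := fun t => (a <= t)%nat /\ ((t < c)%nat \/ I i' t)).
  assert (HW : is_interval W) by (apply itv_co; lia).
  assert (HU : is_interval U) by (apply itv_cc; lia).
  assert (HV : is_interval V).
  { split; [exists r; split; auto; lia|split].
    - intros n [Hn _]. auto.
    - intros p q s [Hp1 Hp2] [Hs1 Hs2] H1 H2. split; [apply (HIc p q s); auto|lia]. }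
  assert (HY : is_interval Y).
  { split; [exists a; split; auto; lia|split].
    - intros n [Hn _]. lia.
    - intros p q s [Hp1 Hp2] [Hs1 Hs2] H1 H2. split; [lia|].
      destruct (Nat.lt_ge_cases q c); [left; auto|right].
      destruct Hs2 as [Hs2|Hs2]; [lia|]. apply (HIc c q s); auto. }
  set (w := isum x W). set (u := isum x U). set (v := isum x V).
  assert (EL : isum x (L j) = w + u).
  { apply isum_split; try apply ex_isum_interval; auto.
    - unfold W, U. intros t [H1 H2]. lia.
    - intros t. rewrite HLchar. unfold W, U. lia. }
  assert (EI : isum x (I i') = u + v).
  { apply isum_split; try apply ex_isum_interval; auto.
    - unfold U, V. intros t [H1 H2]. lia.
    - intros t. unfold U, V. cbv beta. split.
      + intros Ht. destruct (Nat.le_gt_cases t b); [left; split; [apply Hc2; exact Ht|lia]|right; split; [exact Ht|lia]].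
      + intros [Ht|Ht]; [apply HIcb; lia|apply Ht]. }
  assert (EY : isum x Y = w + isum x (I i')).
  { apply isum_split; try apply ex_isum_interval; auto.
    - unfold W. intros t [H1 H2]. pose proof (Hc2 t H2). lia.
    - intros t. unfold Y, W. cbv beta. split.
      + intros [H1 [H2|H2]]; [left; lia|right; auto].
      + intros [H1|H1]; [split; [lia|left; lia]|]. pose proof (Hc2 t H1). split; [lia|right; auto]. }
  assert (Hsub_L : forall P, (forall t, P t -> (a <= t <= b)%nat) -> forall t, P t -> L j t).
  { intros P HP t Ht. apply HLchar, HP, Ht. }
  assert (F1 : w <> 0).
  { intros Hw. pose proof (RL1 x L G N j ((fun t => t = a) :: U :: nil) HFL HNL HN0 Hb Hj) as H.
    rewrite sumsq2, isum_single, EL, Hw in H.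
    assert (x a ^ 2 <= 0).
    { apply Rplus_le_reg_r with (u ^ 2). rewrite Rplus_0_l. replace (0 + u) with u in H by ring. apply H.
      - apply valid2; [apply itv_1; lia|auto|]. unfold U. intros t [H1 H2]. lia.
      - intros P [<-|[<-|[]]] t Ht; apply HLchar; unfold U in *; lia. }
    destruct Has as [_ Has]. apply Has. simpl in *. nra. }
  assert (F2 : u <> 0).
  { intros Hu. pose proof (RL1 x I F N i' ((fun t => t = c) :: V :: nil) HFI HNI HN0 Hb Hi') as H.
    rewrite sumsq2, isum_single, EI, Hu in H.
    assert (x c ^ 2 <= 0).
    { apply Rplus_le_reg_r with (v ^ 2). rewrite Rplus_0_l. replace (0 + v) with v in H by ring. apply H.
      - apply valid2; [apply itv_1; lia|auto|]. unfold V. intros t [H1 [H2 H3]]. lia.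
      - intros P [<-|[<-|[]]] t Ht; [subst; auto|apply Ht]. }
    destruct Hcs as [_ Hcs]. apply Hcs. simpl in *. nra. }
  assert (F3 : v <> 0).
  { intros Hv. pose proof (RL1 x I F N i' (U :: (fun t => t = r) :: nil) HFI HNI HN0 Hb Hi') as H.
    rewrite sumsq2, isum_single, EI, Hv in H.
    assert (x r ^ 2 <= 0).
    { apply Rplus_le_reg_l with (u ^ 2). rewrite Rplus_0_r. replace (u + 0) with u in H by ring. apply H.
      - apply valid2; [auto|apply itv_1; apply HI1; auto|]. unfold U. intros t [H1 H2]. lia.
      - intros P [<-|[<-|[]]] t Ht; [apply HIcb; unfold U in Ht; lia|subst; auto]. }
    destruct Hr3 as [_ Hr3]. apply Hr3. simpl in *. nra. }
  assert (F4 : w ^ 2 + u ^ 2 <= (w + u) ^ 2).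
  { rewrite <- EL. replace (w ^ 2 + u ^ 2) with (sumsq x (W :: U :: nil)) by (rewrite sumsq2; reflexivity).
    apply (RL1 x L G N j); auto.
    - apply valid2; auto. unfold W, U. intros t [H1 H2]. lia.
    - intros P [<-|[<-|[]]] t Ht; apply HLchar; unfold W, U in *; lia. }
  assert (F5 : u ^ 2 + v ^ 2 <= (u + v) ^ 2).
  { rewrite <- EI. replace (u ^ 2 + v ^ 2) with (sumsq x (U :: V :: nil)) by (rewrite sumsq2; reflexivity).
    apply (RL1 x I F N i'); auto.
    - apply valid2; auto. unfold U, V. intros t [H1 [H2 H3]]. lia.
    - intros P [<-|[<-|[]]] t Ht; [apply HIcb; unfold U in Ht; lia|apply Ht]. }
  set (Pm := sumsq x (map I (seq i (i' - i)))).
  assert (F6 : (w + (u + v)) ^ 2 <= Pm + (u + v) ^ 2).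
  { rewrite <- EI, <- EY. replace (isum x Y ^ 2) with (sumsq x (Y :: nil)) by (rewrite sumsq1; reflexivity).
    replace (Pm + isum x (I i') ^ 2) with (sumsq x (map I (seq i (S i' - i)))).
    2:{ replace (S i' - i)%nat with ((i' - i) + 1)%nat by lia.
        rewrite seq_app, map_app, sumsq_app. replace (i + (i' - i))%nat with i' by lia.
        rewrite <- sumsq1. reflexivity. }
    apply (RL x I F N i i'); auto; [lia| |apply valid1; auto|].
    - intros m Hm. apply (inF_between F i m i'); auto; lia.
    - intros P [<-|[]] m Hm Hr t [H1 H2]. destruct Hr as [Hr|Hr].
      + pose proof (fam_lt I F m i t a HFI Hm Hi Hr H2 Ha1). unfold Y in H1. lia.
      + pose proof (fam_lt I F i' m c t HFI Hi' Hm Hr Hc1 H2). unfold Y in H1.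
        destruct H1 as [_ [H1|H1]]; [lia|].
        pose proof (fam_lt I F i' m t t HFI Hi' Hm Hr H1 H2). lia. }
  assert (F7 : Pm + u ^ 2 <= (w + u) ^ 2).
  { rewrite <- EL. unfold Pm.
    replace (sumsq x (map I (seq i (i' - i))) + u ^ 2) with (sumsq x (map I (seq i (i' - i)) ++ U :: nil))
      by (rewrite sumsq_app, sumsq1; reflexivity).
    apply (RL1 x L G N j); auto.
    - split.
      + intros P HP. apply in_app_or in HP as [HP|[<-|[]]]; auto.
        apply in_map_iff in HP as [m [<- Hm]]. apply in_seq in Hm.
        apply HintI. apply Hmid. lia.
      + apply FOP_app.
        * apply FOP_map; [apply seq_NoDup|]. intros m1 m2 Hm1 Hm2 Hne'.
          apply in_seq in Hm1. apply in_seq in Hm2.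
          apply (fam_disj I F); auto; [apply Hmid|apply Hmid]; lia.
        * constructor; constructor.
        * intros A B HA [<-|[]]. apply in_map_iff in HA as [m [<- Hm]]. apply in_seq in Hm.
          intros t [H1 H2]. destruct (Hmid m ltac:(lia)) as [_ Hm']. apply Hm' in H1.
          unfold U in H2. lia.
    - intros P HP t Ht. apply in_app_or in HP as [HP|[<-|[]]].
      + apply in_map_iff in HP as [m [<- Hm]]. apply in_seq in Hm.
        destruct (Hmid m ltac:(lia)) as [_ Hm']. apply Hm' in Ht. apply HLchar. lia.
      + apply HLchar. unfold U in Ht. lia. }
  assert (Hwu : w * u > 0).
  { assert (w * u >= 0) by nra. destruct (Rle_lt_or_eq_dec 0 (w * u)); [lra|lra|].
    exfalso. symmetry in e. apply Rmult_integral in e as [e|e]; auto. }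
  assert (Huv : u * v > 0).
  { assert (u * v >= 0) by nra. destruct (Rle_lt_or_eq_dec 0 (u * v)); [lra|lra|].
    exfalso. symmetry in e. apply Rmult_integral in e as [e|e]; auto. }
  assert (Hwv : w * v <= 0) by nra.
  assert (0 < (w * u) * (u * v)) by (apply Rmult_lt_0_compat; lra).
  assert (0 < u * u) by nra.
  nra.
Qed.

Lemma cover x I F i t : inJ x -> x_norming_partition x I F -> inF F i = true -> supp x t ->
  exists m, inF F m = true /\ I m t.
Proof.
  intros HJ HPI Hi Ht. apply NNPP. intros Hno.
  set (N := real (normJ x)).
  assert (HN : normJ x = Finite N) by (symmetry; apply HJ).
  destruct (normJ_bound x N HN) as [HN0 Hb].
  pose proof HPI as [[HFI HNI] _]. rewrite HN in HNI.
  pose proof HFI as [_ [HintI _]].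
  pose proof (RLs x I F N i (I i :: (fun s => s = t) :: nil) HFI HNI HN0 Hb Hi) as H.
  rewrite sumsq2, isum_single in H.
  assert (x t ^ 2 <= 0).
  { apply Rplus_le_reg_l with (isum x (I i) ^ 2). rewrite Rplus_0_r. apply H.
    - apply valid2; auto. apply itv_1. apply Ht. intros s [H1 H2]. subst. apply Hno. eauto.
    - intros P [<-|[<-|[]]] m Hm Hne.
      + apply (fam_disj I F); auto.
      + intros s [H1 H2]. subst. apply Hno. eauto. }
  destruct Ht as [_ Ht]. apply Ht. simpl in *. nra.
Qed.

Theorem proposition3p7 (x : nat -> R)
  (I : nat -> nat -> Prop) (F : option nat)
  (L : nat -> nat -> Prop) (G : option nat) (i j : nat) :
  (exists n, supp x n) ->
  inJ x ->
  x_norming_partition x I F ->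
  x_norming_partition x L G ->
  inF F i = true -> inF G j = true ->
  (forall k, I i k -> L j k) ->
  (exists m, is_min (I i) m /\ is_min (L j) m) ->
  (forall i', inF F i' = true -> i' <> i ->
     (forall k, I i' k -> L j k) \/ (forall k, ~ (I i' k /\ L j k))) /\
  (exists Fj : nat -> Prop,
     is_interval Fj /\ (forall i', Fj i' -> inF F i' = true) /\
     (forall k, (L j k /\ supp x k) <->
                (exists i', Fj i' /\ I i' k /\ supp x k))).
Proof.
  intros _ HJ HPI HPL Hi Hj Hsub [a [Ha Hb]].
  assert (Dich : forall i', inF F i' = true -> i' <> i ->
     (forall k, I i' k -> L j k) \/ (forall k, ~ (I i' k /\ L j k))).
  { intros i' Hi' Hne. destruct (classic (forall k, I i' k -> L j k)) as [H|H]; [left; auto|right].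
    intros k [Hk1 Hk2]. apply not_all_ex_not in H as [k' Hk']. apply imply_to_and in Hk' as [Hk'1 Hk'2].
    apply (dich x I F L G i j i' k k' a); auto. }
  split; auto.
  pose proof HPI as [[HFI _] _]. pose proof HFI as [_ [HintI _]].
  pose proof HPL as [[HFL _] _]. pose proof HFL as [_ [HintL _]].
  destruct (HintL j Hj) as [_ [_ HLc]].
  assert (Hin : forall m k, inF F m = true -> I m k -> L j k -> forall t, I m t -> L j t).
  { intros m k Hm Hk1 Hk2. destruct (Nat.eq_dec m i) as [->|Hmi]; [auto|].
    destruct (Dich m Hm Hmi) as [H|H]; auto. exfalso. apply (H k); auto. }
  exists (fun i' => inF F i' = true /\ forall k, I i' k -> L j k).
  split; [|split].
  - split; [exists i; auto|split].
    + intros n [Hn _]. apply (inF_ge1 F); auto.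
    + intros p q s [Hp1 Hp2] [Hs1 Hs2] Hpq Hqs.
      assert (Hq : inF F q = true) by (apply (inF_between F p q s); auto).
      split; auto.
      destruct (Nat.eq_dec q p) as [->|Hqp]; auto.
      destruct (Nat.eq_dec q s) as [->|Hqs']; auto.
      destruct (HintI q Hq) as [[e He] _].
      destruct (HintI p Hp1) as [[e1 He1] _].
      destruct (HintI s Hs1) as [[e3 He3] _].
      pose proof (fam_lt I F p q e1 e HFI Hp1 Hq ltac:(lia) He1 He).
      pose proof (fam_lt I F q s e e3 HFI Hq Hs1 ltac:(lia) He He3).
      apply (Hin q e Hq He). apply (HLc e1 e e3); auto; lia.
  - intros i' [H _]; auto.
  - intros k. split.
    + intros [Hk1 Hk2]. destruct (cover x I F i k HJ HPI Hi Hk2) as [m [Hm1 Hm2]].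
      exists m. split; [split; auto|split; auto]. apply (Hin m k); auto.
    + intros [i' [[H1 H2] [H3 H4]]]. split; auto.
Qed.
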